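(* Fix $\lambda>0$. For real $d\ge1$ let $\tilde x(d)$ be the unique positive solution of $d\,x=1+\lambda/(1+x)^d$ and $\nu(d)=\frac{d\tilde x(d)-1}{1+\tilde x(d)}$. Then the function $H(x)=\log\big(e^x\nu(e^x)\big)$ is concave on $[0,\infty)$.
   Context: Equivalently $\nu(d)=\sup_{x\ge0}\frac{dx}{1+x}\cdot\frac{f(x)}{1+f(x)}$ with $f(x)=\lambda/(1+x)^d$. *)

(* Defs.v *)
From Stdlib Require Import Reals ClassicalEpsilon.
Open Scope R_scope.

Definition xtilde_eq (lam d x : R) : Prop :=
  0 < x /\ d * x = 1 + lam / Rpower (1 + x) d.

Definition xtilde (lam d : R) : R :=
  epsilon (inhabits 0) (fun x => xtilde_eq lam d x).

Definition nu (lam d : R) : R :=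
  (d * xtilde lam d - 1) / (1 + xtilde lam d).

Definition H (lam x : R) : R := ln (exp x * nu lam (exp x)).

Definition concave_on (S : R -> Prop) (f : R -> R) : Prop :=
  forall x y t, S x -> S y -> 0 <= t <= 1 ->
    t * f x + (1 - t) * f y <= f (t * x + (1 - t) * y).

(* Main.v *)
Require Import Defs.
From Stdlib Require Import Reals Lra ClassicalEpsilon.
From Coquelicot Require Import Coquelicot.
Open Scope R_scope.

Lemma exp_le_mono x y : x <= y -> exp x <= exp y.
Proof. intros [H|H]; [left; apply exp_increasing; auto | subst; lra]. Qed.

Lemma ln_le_x1 x : 0 < x -> ln x <= x - 1.
Proof.
  intros Hx. rewrite <- (ln_exp (x - 1)). apply ln_le; auto.
  pose proof (exp_ineq1_le (x-1)). lra.
Qed.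

Lemma wamgm l u v : 0 <= l <= 1 -> 0 < u -> 0 < v ->
  l * ln u + (1 - l) * ln v <= ln (l * u + (1 - l) * v).
Proof.
  intros Hl Hu Hv.
  set (m := l*u + (1-l)*v).
  assert (Hm : 0 < m).
  { unfold m. destruct (Req_dec l 0). subst; lra.
    assert (0 < l) by lra. pose proof (Rmult_lt_0_compat l u H0 Hu).
    assert (0 <= (1-l)*v) by (apply Rmult_le_pos; lra). lra. }
  pose proof (ln_le_x1 (u/m) (Rdiv_lt_0_compat _ _ Hu Hm)).
  pose proof (ln_le_x1 (v/m) (Rdiv_lt_0_compat _ _ Hv Hm)).
  rewrite ln_div in H by auto. rewrite ln_div in H0 by auto.
  assert (l * (ln u - ln m) + (1-l)*(ln v - ln m) <= l*(u/m - 1) + (1-l)*(v/m-1)).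
  { apply Rplus_le_compat; apply Rmult_le_compat_l; lra. }
  assert (l*(u/m - 1) + (1-l)*(v/m-1) = 0).
  { unfold m in *. field. lra. }
  lra.
Qed.

Lemma expconv l p q : 0 <= l <= 1 ->
  exp (l * p + (1 - l) * q) <= l * exp p + (1 - l) * exp q.
Proof.
  intros Hl.
  pose proof (wamgm l (exp p) (exp q) Hl (exp_pos p) (exp_pos q)).
  rewrite !ln_exp in H.
  apply exp_le_mono in H.
  rewrite exp_ln in H; auto.
  destruct (Req_dec l 0). subst. pose proof (exp_pos q); lra.
  pose proof (exp_pos p). pose proof (exp_pos q).
  assert (0 < l * exp p) by (apply Rmult_lt_0_compat; lra).
  assert (0 <= (1-l) * exp q) by (apply Rmult_le_pos; lra). lra.
Qed.

Lemma chord c c' : 0 < c -> c <= c' -> c' * (exp c - 1) <= c * (exp c' - 1).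
Proof.
  intros Hc Hcc.
  assert (Hl : 0 <= c / c' <= 1).
  { split. apply Rlt_le, Rdiv_lt_0_compat; lra.
    apply (Rmult_le_reg_r c'). lra. field_simplify; lra. }
  pose proof (expconv (c/c') c' 0 Hl).
  replace (c / c' * c' + (1 - c / c') * 0) with c in H by (field; lra).
  rewrite exp_0 in H.
  apply (Rmult_le_compat_l c') in H; [|lra].
  replace (c' * (c / c' * exp c' + (1 - c / c') * 1)) with (c * (exp c' - 1) + c') in H by (field; lra).
  lra.
Qed.

Definition Fk k b := ln (1 - exp (- b)) - k * ln b.
Definition Fk' k b := / (exp b - 1) - k / b.

Lemma expm1_pos b : 0 < b -> 0 < exp b - 1.
Proof. intros. pose proof (exp_ineq1 b). lra. Qed.

Lemma one_m_expn b : 0 < b -> 0 < 1 - exp (- b).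
Proof. intros. pose proof (exp_increasing (-b) 0). rewrite exp_0 in H0. lra. Qed.

Lemma Fk_der k b : 0 < b -> derivable_pt_lim (Fk k) b (Fk' k b).
Proof.
  intros Hb. apply is_derive_Reals. unfold Fk, Fk'.
  pose proof (one_m_expn b Hb). pose proof (expm1_pos b Hb).
  auto_derive. repeat split; lra.
  rewrite exp_Ropp. field. pose proof (exp_pos b). repeat split; try lra.
Qed.

Lemma Fk'_expr a0 c : 0 < a0 -> 0 < c ->
  Fk' (a0 / (exp a0 - 1)) c =
  (c * (exp a0 - 1) - a0 * (exp c - 1)) / (c * (exp c - 1) * (exp a0 - 1)).
Proof.
  intros. unfold Fk'. pose proof (expm1_pos _ H). pose proof (expm1_pos _ H0).
  field. repeat split; lra.
Qed.

Lemma tangent a0 b : 0 < a0 -> 0 < b ->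
  Fk (a0 / (exp a0 - 1)) b <= Fk (a0 / (exp a0 - 1)) a0.
Proof.
  intros Ha Hb. set (k := a0 / (exp a0 - 1)).
  destruct (Rtotal_order b a0) as [Hlt|[Heq|Hgt]].
  - destruct (MVT_cor2 (Fk k) (Fk' k) b a0 Hlt) as [c [Hc1 Hc2]].
    { intros c Hc. apply Fk_der. lra. }
    assert (0 <= Fk' k c).
    { unfold k. rewrite Fk'_expr by lra.
      pose proof (chord c a0 ltac:(lra) ltac:(lra)).
      pose proof (expm1_pos a0 Ha). pose proof (expm1_pos c ltac:(lra)).
      apply Rdiv_le_0_compat. lra.
      apply Rmult_lt_0_compat; [apply Rmult_lt_0_compat|]; lra. }
    assert (0 <= Fk' k c * (a0 - b)) by (apply Rmult_le_pos; lra). lra.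
  - subst; lra.
  - destruct (MVT_cor2 (Fk k) (Fk' k) a0 b Hgt) as [c [Hc1 Hc2]].
    { intros c Hc. apply Fk_der. lra. }
    assert (Fk' k c <= 0).
    { unfold k. rewrite Fk'_expr by lra.
      pose proof (chord a0 c ltac:(lra) ltac:(lra)).
      pose proof (expm1_pos a0 Ha). pose proof (expm1_pos c ltac:(lra)).
      unfold Rdiv. apply Rmult_le_0_r. lra.
      apply Rlt_le, Rinv_0_lt_compat.
      apply Rmult_lt_0_compat; [apply Rmult_lt_0_compat|]; lra. }
    assert (Fk' k c * (b - a0) <= 0).
    { apply Rmult_le_0_r; lra. } lra.
Qed.

Lemma pieceA l a1 a2 : 0 <= l <= 1 -> 0 < a1 -> 0 < a2 ->
  l * ln (1 - exp (- a1)) + (1 - l) * ln (1 - exp (- a2)) <=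
  ln (1 - exp (- exp (l * ln a1 + (1 - l) * ln a2))).
Proof.
  intros Hl H1 H2.
  set (a := exp (l * ln a1 + (1 - l) * ln a2)).
  assert (Ha : 0 < a) by apply exp_pos.
  assert (Hla : ln a = l * ln a1 + (1 - l) * ln a2) by (unfold a; apply ln_exp).
  pose proof (tangent a a1 Ha H1). pose proof (tangent a a2 Ha H2).
  unfold Fk in *. set (k := a / (exp a - 1)) in *.
  assert (l * (ln (1 - exp (- a1)) - k * ln a1) + (1-l) * (ln (1 - exp (- a2)) - k * ln a2)
    <= l * (ln (1 - exp (- a)) - k * ln a) + (1-l) * (ln (1 - exp (- a)) - k * ln a)).
  { apply Rplus_le_compat; apply Rmult_le_compat_l; lra. }
  rewrite Hla in H0 at 1. rewrite Hla in H3. nra.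
Qed.

Lemma exp_minus_ln u v : 0 < v -> exp (u - ln v) = exp u / v.
Proof. intros. unfold Rminus. rewrite exp_plus, exp_Ropp, exp_ln; auto. Qed.

Lemma holder lam l w1 w2 : 0 < lam -> 0 <= l <= 1 ->
  ln (lam + exp (l * w1 + (1 - l) * w2)) <=
  l * ln (lam + exp w1) + (1 - l) * ln (lam + exp w2).
Proof.
  intros Hlam Hl.
  set (P := lam + exp w1). set (Q := lam + exp w2).
  assert (HP : 0 < P) by (unfold P; pose proof (exp_pos w1); lra).
  assert (HQ : 0 < Q) by (unfold Q; pose proof (exp_pos w2); lra).
  set (L := l * ln P + (1 - l) * ln Q).
  assert (E1 : exp (ln lam - L) <= l * (lam / P) + (1 - l) * (lam / Q)).
  { replace (ln lam - L) with (l * (ln lam - ln P) + (1 - l) * (ln lam - ln Q)) by (unfold L; ring).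
    assert (e1 : lam / P = exp (ln lam - ln P)) by (rewrite exp_minus_ln, exp_ln; auto).
    assert (e2 : lam / Q = exp (ln lam - ln Q)) by (rewrite exp_minus_ln, exp_ln; auto).
    rewrite e1, e2. apply expconv; auto. }
  assert (E2 : exp (l * w1 + (1 - l) * w2 - L) <= l * (exp w1 / P) + (1 - l) * (exp w2 / Q)).
  { replace (l * w1 + (1 - l) * w2 - L) with (l * (w1 - ln P) + (1 - l) * (w2 - ln Q)) by (unfold L; ring).
    rewrite <- (exp_minus_ln w1 P), <- (exp_minus_ln w2 Q) by auto. apply expconv; auto. }
  unfold Rminus in E1, E2. rewrite (exp_plus (ln lam)), exp_Ropp, exp_ln in E1 by auto.
  rewrite (exp_plus (l * w1 + (1 - l) * w2)), exp_Ropp in E2.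
  assert (Hs : l * (lam / P) + (1 - l) * (lam / Q) + (l * (exp w1 / P) + (1 - l) * (exp w2 / Q)) = 1).
  { unfold P, Q in *. field. lra. }
  assert (HeL := exp_pos L).
  assert ((lam + exp (l * w1 + (1 - l) * w2)) / exp L <= 1).
  { unfold Rdiv in *. rewrite Rmult_plus_distr_r. lra. }
  assert (lam + exp (l * w1 + (1 - l) * w2) <= exp L).
  { apply (Rmult_le_reg_r (/ exp L)). apply Rinv_0_lt_compat; auto.
    rewrite Rinv_r by lra. exact H. }
  rewrite <- (ln_exp L). apply ln_le; auto. pose proof (exp_pos (l * w1 + (1 - l) * w2)); lra.
Qed.

Lemma pieceB lam l t1 t2 a1 a2 : 0 < lam -> 0 <= l <= 1 -> 0 < a1 -> 0 < a2 ->
  ln (lam + exp (exp (l * t1 + (1 - l) * t2) * exp (l * ln a1 + (1 - l) * ln a2))) <=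
  l * ln (lam + exp (exp t1 * a1)) + (1 - l) * ln (lam + exp (exp t2 * a2)).
Proof.
  intros Hlam Hl H1 H2.
  eapply Rle_trans; [| apply holder; auto].
  apply ln_le. pose proof (exp_pos (exp (l * t1 + (1 - l) * t2) * exp (l * ln a1 + (1 - l) * ln a2))); lra.
  apply Rplus_le_compat_l, exp_le_mono.
  rewrite <- exp_plus.
  replace (l * t1 + (1 - l) * t2 + (l * ln a1 + (1 - l) * ln a2)) with
    (l * (t1 + ln a1) + (1 - l) * (t2 + ln a2)) by ring.
  rewrite <- (exp_ln a1) at 2 by auto. rewrite <- (exp_ln a2) at 2 by auto.
  rewrite <- !exp_plus. apply expconv; auto.
Qed.

Lemma xt_exists lam d : 0 < lam -> 0 < d -> exists x, xtilde_eq lam d x.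
Proof.
  intros Hlam Hd.
  set (f := fun a => d * (exp a - 1) - 1 - lam * exp (- (d * a))).
  assert (Hc : continuity f).
  { intro a. apply derivable_continuous_pt. unfold f. reg. }
  set (M := (1 + lam) / d + 1).
  assert (HM : 0 < M) by (unfold M; assert (0 < (1+lam)/d) by (apply Rdiv_lt_0_compat; lra); lra).
  assert (f0 : f 0 < 0).
  { unfold f. rewrite Rmult_0_r, Ropp_0, exp_0. lra. }
  assert (fM : 0 < f M).
  { unfold f. pose proof (exp_ineq1_le M).
    assert (exp (- (d * M)) < 1).
    { rewrite <- exp_0. apply exp_increasing. pose proof (Rmult_lt_0_compat d M Hd HM). lra. }
    assert (d * (exp M - 1) >= d * M) by (apply Rle_ge, Rmult_le_compat_l; lra).
    assert (d * M = 1 + lam + d) by (unfold M; field; lra).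
    assert (lam * exp (- (d * M)) < lam * 1) by (apply Rmult_lt_compat_l; lra). lra. }
  destruct (IVT f 0 M Hc HM f0 fM) as [z [Hz1 Hz2]].
  assert (Hz0 : z <> 0) by (intro; subst; lra).
  exists (exp z - 1). split.
  - pose proof (exp_increasing 0 z ltac:(lra)). rewrite exp_0 in H. lra.
  - unfold Rpower. replace (1 + (exp z - 1)) with (exp z) by ring. rewrite ln_exp.
    unfold f in Hz2. rewrite exp_Ropp in Hz2. unfold Rdiv. lra.
Qed.

Lemma xt_spec lam d : 0 < lam -> 0 < d -> xtilde_eq lam d (xtilde lam d).
Proof. intros. unfold xtilde. apply epsilon_spec. apply xt_exists; auto. Qed.

Definition psi lam t a :=
  2 * t + ln lam + ln (1 - exp (- a)) - ln (lam + exp (exp t * a)).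

Lemma amgm_s d s : 0 < d -> d + 1 <= exp (d * s) + d * exp (- s).
Proof.
  intros Hd.
  assert (Hl : 0 <= / (d + 1) <= 1).
  { split. apply Rlt_le, Rinv_0_lt_compat; lra.
    rewrite <- Rinv_1. apply Rinv_le_contravar; lra. }
  pose proof (expconv (/ (d+1)) (d * s) (- s) Hl).
  replace (/ (d + 1) * (d * s) + (1 - / (d + 1)) * - s) with 0 in H by (field; lra).
  rewrite exp_0 in H.
  apply (Rmult_le_compat_l (d+1)) in H; [|lra].
  replace ((d + 1) * (/ (d + 1) * exp (d * s) + (1 - / (d + 1)) * exp (- s)))
    with (exp (d * s) + d * exp (- s)) in H by (field; lra). lra.
Qed.

Lemma Hrep lam t : 0 < lam ->
  exists a0, 0 < a0 /\ H lam t = psi lam t a0 /\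
    forall a, 0 < a -> psi lam t a <= H lam t.
Proof.
  intros Hlam.
  set (d := exp t). assert (Hd : 0 < d) by apply exp_pos.
  destruct (xt_spec lam d Hlam Hd) as [HX Heq].
  set (X := xtilde lam d) in *.
  set (a0 := ln (1 + X)).
  assert (HA0 : exp a0 = 1 + X) by (unfold a0; apply exp_ln; lra).
  assert (Ha0 : 0 < a0).
  { unfold a0. rewrite <- ln_1. apply ln_increasing; lra. }
  assert (Hpow : Rpower (1 + X) d = exp (d * a0)) by reflexivity.
  rewrite Hpow in Heq.
  set (E := exp (d * a0)) in *. assert (HE : 0 < E) by apply exp_pos.
  assert (Hlamv : lam = (d * X - 1) * E) by (rewrite Heq; field; lra).
  assert (HdX : 0 < d * X - 1).
  { rewrite Heq. assert (0 < lam / E) by (apply Rdiv_lt_0_compat; lra). lra. }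
  assert (HH : H lam t = t + ln lam - d * a0 - a0).
  { unfold H, nu. fold d. fold X.
    replace (d * ((d * X - 1) / (1 + X))) with (exp (t + ln lam - d * a0 - a0)).
    apply ln_exp.
    unfold Rminus. rewrite !exp_plus, !exp_Ropp, exp_ln by auto. fold d. fold E.
    rewrite HA0, Hlamv. field. lra. }
  exists a0. split; [auto|split].
  - rewrite HH. unfold psi. fold d.
    assert (e1 : 1 - exp (- a0) = X / (1 + X)) by (rewrite exp_Ropp, HA0; field; lra).
    assert (e2 : lam + exp (d * a0) = exp t * X * E) by (fold d; fold E; rewrite Hlamv; ring).
    rewrite e1, e2. rewrite !ln_mult, ln_div, ln_exp; try apply exp_pos; try lra.
    2:{ apply Rmult_lt_0_compat; try apply exp_pos; lra. }
    unfold E. rewrite ln_exp. unfold a0. ring.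
  - intros a Ha. rewrite HH. unfold psi. fold d.
    set (s := a - a0).
    pose proof (amgm_s d s Hd) as Ham.
    assert (ea : exp a = exp a0 * exp s) by (rewrite <- exp_plus; unfold s; f_equal; ring).
    assert (eda : exp (d * a) = E * exp (d * s)) by (unfold E; rewrite <- exp_plus; unfold s; f_equal; ring).
    assert (ems : exp (- s) = exp a0 / exp a) by (rewrite ea, exp_Ropp; field; split; apply Rgt_not_eq, exp_pos).
    assert (Hkey : d * (1 - exp (- a)) * (E * exp a0) <= lam + exp (d * a)).
    { rewrite eda, Hlamv, exp_Ropp.
      assert (0 < exp a) by apply exp_pos.
      rewrite ems in Ham. rewrite HA0 in *.
      assert (e3 : d * (1 - / exp a) * (E * (1 + X)) =
        E * (d * (1 + X) - d * ((1 + X) / exp a))) by (field; lra).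
      rewrite e3.
      assert (0 <= E * (exp (d * s) + d * ((1 + X) / exp a) - (d + 1))) by (apply Rmult_le_pos; lra).
      nra. }
    assert (0 < 1 - exp (- a)) by (apply one_m_expn; auto).
    apply ln_le in Hkey.
    2: { apply Rmult_lt_0_compat. apply Rmult_lt_0_compat; lra. apply Rmult_lt_0_compat; [lra|apply exp_pos]. }
    rewrite !ln_mult in Hkey by (try apply Rmult_lt_0_compat; try apply exp_pos; lra).
    unfold E in Hkey. rewrite !ln_exp in Hkey. unfold d in Hkey at 1. rewrite ln_exp in Hkey.
    lra.
Qed.

Theorem lemma5p2 (lam : R) (hlam : 0 < lam) :
  concave_on (fun x => 0 <= x) (H lam).
Proof.
  intros x y l _ _ Hl.
  destruct (Hrep lam x hlam) as [a1 [Ha1 [Hx _]]].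
  destruct (Hrep lam y hlam) as [a2 [Ha2 [Hy _]]].
  destruct (Hrep lam (l * x + (1 - l) * y) hlam) as [_ [_ [_ Hz]]].
  set (a := exp (l * ln a1 + (1 - l) * ln a2)).
  assert (Ha : 0 < a) by apply exp_pos.
  specialize (Hz a Ha).
  pose proof (pieceA l a1 a2 Hl Ha1 Ha2) as PA.
  pose proof (pieceB lam l x y a1 a2 hlam Hl Ha1 Ha2) as PB.
  fold a in PA, PB.
  rewrite Hx, Hy. unfold psi in *.
  nra.
Qed.
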